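(* Let $n\ge0$ and $k\ge1$ be integers, $\rho\ne0$ real, $0\le q<1$, and $z$ a complex number. Then $$\sum_{m=0}^n S_1\!\left(n,m,\frac{z}{\rho}\right)\rho^{-m}B_{m,\rho,q}^{(k)}(z)=\frac{n!}{\rho^n[n+1]_q^k},$$ $$\sum_{m=0}^n S_2\!\left(n,m,\frac{z}{\rho}\right)\rho^{-m}c_{m,\rho,q}^{(k)}(z)=\frac{1}{\rho^n[n+1]_q^k},$$ $$\sum_{m=0}^n S_2\!\left(n,m,-\frac{z}{\rho}\right)\rho^{-m}\widehat c_{m,\rho,q}^{(k)}(z)=\frac{(-1)^n}{\rho^n[n+1]_q^k}.$$
   Context: For real $0\le q<1$ (with $0^0=1$), $[x]_q=\frac{1-q^x}{1-q}$. ${\rm Li}_{k,q}(w)=\sum_{m\ge1}w^m/[m]_q^k$. The $q$-poly-Bernoulli polynomials with parameter $\rho$: $\frac{\rho}{1-e^{-\rho t}}{\rm Li}_{k,q}\left(\frac{1-e^{-\rho t}}{\rho}\right)e^{-tz}=\sum_{n\ge0} B_{n,\rho,q}^{(k)}(z)\frac{t^n}{n!}$ (formal power series in $t$). Jackson's $q$-integral: $\int_0^1 f(x)\,d_qx=(1-q)\sum_{j\ge0} f(q^j)q^j$; multiple integrals are iterated. $(x)_n=x(x-1)\cdots(x-n+1)$, $(x)_0=1$. The $q$-poly-Cauchy polynomials of the first and second kind with parameter $\rho$ are $c_{n,\rho,q}^{(k)}(z)=\rho^n\int_0^1\cdots\int_0^1\left(\frac{x_1\cdots x_k-z}{\rho}\right)_n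 d_qx_1\cdots d_qx_k$ and $\widehat c_{n,\rho,q}^{(k)}(z)=\rho^n\int_0^1\cdots\int_0^1\left(\frac{-x_1\cdots x_k+z}{\rho}\right)_n d_qx_1\cdots d_qx_k$ ($k$-fold). Weighted Stirling numbers (Carlitz): $\frac{(1-t)^{-x}(-\ln(1-t))^m}{m!}=\sum_{n\ge0}S_1(n,m,x)\frac{t^n}{n!}$ and $\frac{e^{xt}(e^t-1)^m}{m!}=\sum_{n\ge0}S_2(n,m,x)\frac{t^n}{n!}$. *)

(* Defs.v *)
From Stdlib Require Import Reals Factorial ClassicalEpsilon.
Open Scope R_scope.

Definition Cx : Type := (R * R)%type.
Definition RtoC (r : R) : Cx := (r, 0).
Definition Cadd (a b : Cx) : Cx := (fst a + fst b, snd a + snd b).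
Definition Copp (a : Cx) : Cx := (- fst a, - snd a).
Definition Csub (a b : Cx) : Cx := Cadd a (Copp b).
Definition Cmul (a b : Cx) : Cx :=
  (fst a * fst b - snd a * snd b, fst a * snd b + snd a * fst b).
Definition Cscal (r : R) (a : Cx) : Cx := (r * fst a, r * snd a).
Definition C0 : Cx := RtoC 0.
Definition C1 : Cx := RtoC 1.

(** [Csum F n] = F 0 + F 1 + ... + F n  (n+1 terms, like sum_f_R0) *)
Fixpoint Csum (F : nat -> Cx) (n : nat) : Cx :=
  match n with
  | O => F O
  | S n' => Cadd (Csum F n') (F (S n'))
  end.

Definition fps : Type := nat -> Cx.
Definition fps_add (f g : fps) : fps := fun n => Cadd (f n) (g n).
Definition fps_sub (f g : fps) : fps := fun n => Csub (f n) (g n).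
Definition fps_cscal (c : Cx) (f : fps) : fps := fun n => Cmul c (f n).
Definition fps_rscal (r : R) (f : fps) : fps := fun n => Cscal r (f n).
Definition fps_const (c : Cx) : fps := fun n => match n with O => c | _ => C0 end.
Definition fps_one : fps := fps_const C1.
Definition fps_X : fps := fun n => match n with 1%nat => C1 | _ => C0 end.
Definition fps_mul (f g : fps) : fps :=
  fun n => Csum (fun i => Cmul (f i) (g (n - i)%nat)) n.
Fixpoint fps_pow (f : fps) (j : nat) : fps :=
  match j with O => fps_one | S j' => fps_mul (fps_pow f j') f end.
(** exp(F) = sum_j F^j / j!  for a series F with zero constant term
    (only used for such F; the coefficient of t^n only involves j <= n). *)
Definition fps_exp (f : fps) : fps :=
  fun n => Csum (fun j => Cscal (/ INR (fact j)) (fps_pow f j n)) n.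
(** -ln(1-t) = sum_{i>=1} t^i / i *)
Definition fps_mlog1m : fps :=
  fun n => match n with O => C0 | _ => RtoC (/ INR n) end.

(** (1-t)^{-x} (-ln(1-t))^m / m! = sum_n S1(n,m,x) t^n/n!,
    with (1-t)^{-x} := exp(x * (-ln(1-t))) *)
Definition S1w (n m : nat) (x : Cx) : Cx :=
  Cscal (INR (fact n))
    (fps_mul (fps_exp (fps_cscal x fps_mlog1m))
             (fps_rscal (/ INR (fact m)) (fps_pow fps_mlog1m m)) n).
(** e^{xt} (e^t - 1)^m / m! = sum_n S2(n,m,x) t^n/n! *)
Definition S2w (n m : nat) (x : Cx) : Cx :=
  Cscal (INR (fact n))
    (fps_mul (fps_exp (fps_cscal x fps_X))
             (fps_rscal (/ INR (fact m))
                (fps_pow (fps_sub (fps_exp fps_X) fps_one) m)) n).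

Definition qnum (q : R) (x : nat) : R := (1 - q ^ x) / (1 - q).

Definition fps_w (rho : R) : fps :=
  fps_rscal (/ rho) (fps_sub fps_one (fps_exp (fps_rscal (- rho) fps_X))).
(** rho/(1-e^{-rho t}) * Li_{k,q}(w) = (1/w) * sum_{m>=1} w^m/[m]_q^k
    = sum_{m>=1} w^(m-1)/[m]_q^k ; the coefficient of t^n only involves
    m <= n+1 (w has zero constant term). *)
Definition fps_Li_over_w (k : nat) (rho q : R) : fps :=
  fun n => Csum (fun j => Cscal (/ (qnum q (S j)) ^ k) (fps_pow (fps_w rho) j n)) n.
(** generating function: rho/(1-e^{-rho t}) Li_{k,q}(...) e^{-tz}
                         = sum_n B_{n,rho,q}^{(k)}(z) t^n / n! *)
Definition qpolyBernoulli (n k : nat) (rho q : R) (z : Cx) : Cx :=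
  Cscal (INR (fact n))
    (fps_mul (fps_Li_over_w k rho q) (fps_exp (fps_cscal (Copp z) fps_X)) n).

Definition Rseries (a : nat -> R) : R :=
  epsilon (inhabits 0) (fun l => infinite_sum a l).
(** int_0^1 f(x) d_q x = (1-q) sum_{j>=0} f(q^j) q^j, for complex-valued f *)
Definition jackson (q : R) (f : R -> Cx) : Cx :=
  ((1 - q) * Rseries (fun j => fst (f (q ^ j)) * q ^ j),
   (1 - q) * Rseries (fun j => snd (f (q ^ j)) * q ^ j)).
(** k-fold iterated Jackson integral of an integrand depending on the product
    x_1 ... x_k:   jackson_multi q k F = int ... int F(x_1 ... x_k) d_qx_1 ... d_qx_k
    (outer integral in x_1, ..., innermost in x_k). *)
Fixpoint jackson_multi (q : R) (k : nat) (F : R -> Cx) : Cx :=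
  match k with
  | O => F 1
  | S k' => jackson q (fun x => jackson_multi q k' (fun y => F (x * y)))
  end.

Fixpoint Cfall (x : Cx) (n : nat) : Cx :=
  match n with
  | O => C1
  | S n' => Cmul (Cfall x n') (Csub x (RtoC (INR n')))
  end.

Definition qpolyCauchy1 (n k : nat) (rho q : R) (z : Cx) : Cx :=
  Cscal (rho ^ n)
    (jackson_multi q k (fun P => Cfall (Cscal (/ rho) (Csub (RtoC P) z)) n)).
Definition qpolyCauchy2 (n k : nat) (rho q : R) (z : Cx) : Cx :=
  Cscal (rho ^ n)
    (jackson_multi q k (fun P => Cfall (Cscal (/ rho) (Csub z (RtoC P))) n)).

(* Main.v *)
Require Import Defs.
From Stdlib Require Import Reals Factorial Lra Psatz FunctionalExtensionality ClassicalEpsilon.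
From Coquelicot Require Coquelicot.
From HB Require Import structures.
From mathcomp Require all_boot all_order all_algebra.
From mathcomp Require boolp.
From mathcomp Require ring.
Set Warnings "-notation-overridden -ambiguous-paths -redundant-canonical-projection".
Open Scope R_scope.


Module Jack.
Import Coquelicot.Coquelicot.

Lemma is_sum_plus a b la lb : infinite_sum a la -> infinite_sum b lb ->
  infinite_sum (fun n => a n + b n) (la + lb).
Proof.
intros Ha Hb; apply is_series_Reals; apply is_series_Reals in Ha; apply is_series_Reals in Hb.
exact (is_series_plus a b la lb Ha Hb).
Qed.

Lemma is_sum_scal c a l : infinite_sum a l -> infinite_sum (fun n => c * a n) (c * l).
Proof.
intros Ha; apply is_series_Reals; apply is_series_Reals in Ha.
exact (is_series_scal_l c a l Ha).
Qed.

Lemma inf_ext a b l : infinite_sum a l -> (forall n, a n = b n) -> infinite_sum b l.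
Proof.
intros H E. replace b with a; [exact H|]. apply functional_extensionality; exact E.
Qed.

Lemma Rseries_eq a l : infinite_sum a l -> Rseries a = l.
Proof.
intros H; unfold Rseries.
apply (uniqueness_sum a); [|exact H].
apply (epsilon_spec (inhabits 0) (fun l => infinite_sum a l)); exists l; exact H.
Qed.

Lemma qpow01 q j : 0 <= q <= 1 -> 0 <= q ^ j <= 1.
Proof.
intros Hq; induction j as [|j IH]; simpl; [lra|].
split; [apply Rmult_le_pos; lra|].
replace 1 with (1 * 1) by ring; apply Rmult_le_compat; lra.
Qed.

Lemma series_bound q M a : 0 <= q < 1 -> (forall j, Rabs (a j) <= M * q ^ j) ->
  exists l, infinite_sum a l /\ Rabs l <= M / (1 - q).
Proof.
intros Hq Ha.
assert (Hg : is_series (fun j => M * q ^ j) (M * / (1 - q))).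
{ apply (is_series_scal_l M (fun j => q ^ j)). apply is_series_geom. rewrite Rabs_right; lra. }
assert (Hab : ex_series (fun j => Rabs (a j))).
{ apply (ex_series_le (fun j => Rabs (a j)) (fun j => M * q ^ j)).
  - intros j. unfold norm; simpl. rewrite Rabs_Rabsolu. apply Ha.
  - exists (M * / (1 - q)); exact Hg. }
assert (Hex : ex_series a) by (apply ex_series_Rabs; exact Hab).
exists (Series a); split.
- apply is_series_Reals. apply Series_correct; exact Hex.
- apply Rle_trans with (Series (fun j => Rabs (a j))); [apply Series_Rabs; exact Hab|].
  replace (M / (1 - q)) with (Series (fun j => M * q ^ j)).
  + apply Series_le; [|exists (M * / (1 - q)); exact Hg].
    intros j; split; [apply Rabs_pos| apply Ha].
  + unfold Rdiv; apply is_series_unique; exact Hg.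
Qed.

Definition bnd (F : R -> Cx) (M : R) :=
  forall t, 0 <= t <= 1 -> Rabs (fst (F t)) <= M /\ Rabs (snd (F t)) <= M.
Definition bounded (F : R -> Cx) := exists M, bnd F M.

Lemma bnd_nonneg F M : bnd F M -> 0 <= M.
Proof. intros H; destruct (H 0) as [H1 _]; [lra|]. pose proof (Rabs_pos (fst (F 0))); lra. Qed.

Lemma prod_bound a b M1 M2 : Rabs a <= M1 -> Rabs b <= M2 -> Rabs (a * b) <= M1 * M2.
Proof. intros. rewrite Rabs_mult; apply Rmult_le_compat; auto using Rabs_pos. Qed.

Lemma bounded_const c : bounded (fun _ => c).
Proof. exists (Rabs (fst c) + Rabs (snd c)); intros t _; pose proof (Rabs_pos (fst c)); pose proof (Rabs_pos (snd c)); lra. Qed.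

Lemma bounded_id : bounded (fun t => RtoC t).
Proof. exists 1; intros t Ht; unfold RtoC; simpl; rewrite Rabs_R0; split; [|lra]. rewrite Rabs_right; lra. Qed.

Lemma bounded_add F G : bounded F -> bounded G -> bounded (fun t => Cadd (F t) (G t)).
Proof.
intros [M1 H1] [M2 H2]; exists (M1 + M2); intros t Ht; destruct (H1 t Ht), (H2 t Ht).
unfold Cadd; simpl; split; eapply Rle_trans; try apply Rabs_triang; lra.
Qed.

Lemma bounded_opp F : bounded F -> bounded (fun t => Copp (F t)).
Proof. intros [M H]; exists M; intros t Ht; unfold Copp; simpl; rewrite !Rabs_Ropp; apply H; exact Ht. Qed.

Lemma bounded_sub F G : bounded F -> bounded G -> bounded (fun t => Csub (F t) (G t)).
Proof. intros; apply bounded_add; [|apply bounded_opp]; assumption. Qed.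

Lemma bounded_mul F G : bounded F -> bounded G -> bounded (fun t => Cmul (F t) (G t)).
Proof.
intros [M1 H1] [M2 H2]; exists (M1 * M2 + M1 * M2); intros t Ht; destruct (H1 t Ht), (H2 t Ht).
unfold Cmul; simpl; split.
- unfold Rminus; eapply Rle_trans; [apply Rabs_triang|]; rewrite Rabs_Ropp.
  pose proof (prod_bound (fst (F t)) (fst (G t)) M1 M2); pose proof (prod_bound (snd (F t)) (snd (G t)) M1 M2); lra.
- eapply Rle_trans; [apply Rabs_triang|].
  pose proof (prod_bound (fst (F t)) (snd (G t)) M1 M2); pose proof (prod_bound (snd (F t)) (fst (G t)) M1 M2); lra.
Qed.

Lemma bounded_scal r F : bounded F -> bounded (fun t => Cscal r (F t)).
Proof.
intros [M H]; exists (Rabs r * M); intros t Ht; destruct (H t Ht); unfold Cscal; simpl.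
split; apply prod_bound; lra.
Qed.

Lemma bounded_Cfall g m : bounded g -> bounded (fun t => Cfall (g t) m).
Proof.
intros Hg; induction m as [|m IH]; cbn [Cfall].
- apply bounded_const.
- apply bounded_mul; [exact IH|]. apply bounded_sub; [exact Hg|apply bounded_const].
Qed.

Lemma bounded_Csum (F : nat -> R -> Cx) n : (forall m, bounded (F m)) ->
  bounded (fun t => Csum (fun m => F m t) n).
Proof.
intros HF; induction n as [|n IH]; cbn [Csum]; [apply HF|]. apply bounded_add; [exact IH|apply HF].
Qed.

Section Q.
Variable q : R.
Hypothesis Hq : 0 <= q < 1.

Lemma term_bound (g : R -> R) M j : (forall t, 0 <= t <= 1 -> Rabs (g t) <= M) ->
  Rabs (g (q ^ j) * q ^ j) <= M * q ^ j.
Proof.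
intros Hg. pose proof (qpow01 q j (conj (proj1 Hq) (Rlt_le _ _ (proj2 Hq)))) as Hp.
rewrite Rabs_mult, (Rabs_right (q ^ j)) by lra.
apply Rmult_le_compat_r; [lra|]. apply Hg; exact Hp.
Qed.

Lemma comp_conv (g : R -> R) M : (forall t, 0 <= t <= 1 -> Rabs (g t) <= M) ->
  exists l, infinite_sum (fun j => g (q ^ j) * q ^ j) l /\ Rabs l <= M / (1 - q) /\
    Rseries (fun j => g (q ^ j) * q ^ j) = l.
Proof.
intros Hg. destruct (series_bound q M (fun j => g (q ^ j) * q ^ j) Hq) as [l [Hl Hb]].
- intros j; apply term_bound; exact Hg.
- exists l; split; [exact Hl|split; [exact Hb|apply Rseries_eq; exact Hl]].
Qed.

Lemma jackson_bound f M : bnd f M ->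
  Rabs (fst (jackson q f)) <= M /\ Rabs (snd (jackson q f)) <= M.
Proof.
intros Hf.
destruct (comp_conv (fun t => fst (f t)) M) as [l1 [_ [B1 E1]]].
{ intros t Ht; apply (Hf t Ht). }
destruct (comp_conv (fun t => snd (f t)) M) as [l2 [_ [B2 E2]]].
{ intros t Ht; apply (Hf t Ht). }
unfold jackson; simpl. rewrite E1, E2.
assert (H1q : 0 < 1 - q) by lra.
split; rewrite Rabs_mult, (Rabs_right (1 - q)) by lra;
  [apply Rmult_le_reg_l with (/ (1 - q))| apply Rmult_le_reg_l with (/ (1 - q))];
  try (apply Rinv_0_lt_compat; lra);
  rewrite <- Rmult_assoc, Rinv_l by lra; lra.
Qed.

Lemma jackson_ext01 f g : (forall t, 0 <= t <= 1 -> f t = g t) -> jackson q f = jackson q g.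
Proof.
intros H. assert (E : forall j, f (q ^ j) = g (q ^ j)).
{ intros j; apply H; apply qpow01; lra. }
unfold jackson.
replace (fun j => fst (f (q ^ j)) * q ^ j) with (fun j => fst (g (q ^ j)) * q ^ j)
  by (apply functional_extensionality; intros j; rewrite E; reflexivity).
replace (fun j => snd (f (q ^ j)) * q ^ j) with (fun j => snd (g (q ^ j)) * q ^ j)
  by (apply functional_extensionality; intros j; rewrite E; reflexivity).
reflexivity.
Qed.

Lemma jackson_lin (c : Cx) f g M1 M2 : bnd f M1 -> bnd g M2 ->
  jackson q (fun t => Cadd (Cmul c (f t)) (g t)) = Cadd (Cmul c (jackson q f)) (jackson q g).
Proof.
intros Hf Hg.
destruct (comp_conv (fun t => fst (f t)) M1) as [a1 [S1 [_ E1]]]; [intros t Ht; apply (Hf t Ht)|].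
destruct (comp_conv (fun t => snd (f t)) M1) as [a2 [S2 [_ E2]]]; [intros t Ht; apply (Hf t Ht)|].
destruct (comp_conv (fun t => fst (g t)) M2) as [b1 [T1 [_ F1]]]; [intros t Ht; apply (Hg t Ht)|].
destruct (comp_conv (fun t => snd (g t)) M2) as [b2 [T2 [_ F2]]]; [intros t Ht; apply (Hg t Ht)|].
destruct c as [c1 c2].
unfold jackson, Cadd, Cmul; simpl. rewrite E1, E2, F1, F2.
f_equal.
- rewrite (Rseries_eq _ (c1 * a1 + - c2 * a2 + b1)); [ring|].
  apply inf_ext with (fun n => c1 * (fst (f (q ^ n)) * q ^ n) + - c2 * (snd (f (q ^ n)) * q ^ n)
     + fst (g (q ^ n)) * q ^ n).
  + apply is_sum_plus; [apply is_sum_plus|]; try apply is_sum_scal; assumption.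
  + intros n; ring.
- rewrite (Rseries_eq _ (c1 * a2 + c2 * a1 + b2)); [ring|].
  apply inf_ext with (fun n => c1 * (snd (f (q ^ n)) * q ^ n) + c2 * (fst (f (q ^ n)) * q ^ n)
     + snd (g (q ^ n)) * q ^ n).
  + apply is_sum_plus; [apply is_sum_plus|]; try apply is_sum_scal; assumption.
  + intros n; ring.
Qed.

Lemma bnd_sub F M x : 0 <= x <= 1 -> bnd F M -> bnd (fun y => F (x * y)) M.
Proof.
intros Hx HF t Ht. apply HF. split; [apply Rmult_le_pos; lra|].
replace 1 with (1 * 1) by ring; apply Rmult_le_compat; lra.
Qed.

Lemma Jk_bound k : forall F M, bnd F M ->
  Rabs (fst (jackson_multi q k F)) <= M /\ Rabs (snd (jackson_multi q k F)) <= M.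
Proof.
induction k as [|k IH]; intros F M HF; cbn [jackson_multi].
- apply HF; lra.
- apply jackson_bound. intros x Hx. apply IH. apply bnd_sub; assumption.
Qed.

Lemma Jk_bnd k F M : bnd F M -> bnd (fun x => jackson_multi q k (fun y => F (x * y))) M.
Proof. intros HF x Hx. apply Jk_bound. apply bnd_sub; assumption. Qed.

Lemma Jk_lin k : forall (c : Cx) F G M1 M2, bnd F M1 -> bnd G M2 ->
  jackson_multi q k (fun t => Cadd (Cmul c (F t)) (G t)) =
  Cadd (Cmul c (jackson_multi q k F)) (jackson_multi q k G).
Proof.
induction k as [|k IH]; intros c F G M1 M2 HF HG; cbn [jackson_multi]; [reflexivity|].
rewrite (jackson_ext01 _ (fun x => Cadd (Cmul c (jackson_multi q k (fun y => F (x * y))))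
                                      (jackson_multi q k (fun y => G (x * y))))).
- apply (jackson_lin c _ _ M1 M2); apply Jk_bnd; assumption.
- intros x Hx. apply (IH c _ _ M1 M2); apply bnd_sub; assumption.
Qed.

Lemma pow_comb (j i : nat) : (q ^ j) ^ i * q ^ j = (q ^ S i) ^ j.
Proof.
rewrite <- !pow_mult, <- pow_add. f_equal. lia.
Qed.

Lemma qnum_pos n : (0 < n)%nat -> 0 < qnum q n.
Proof.
intros Hn. unfold qnum. pose proof (pow_lt_1_compat q n Hq Hn).
apply Rdiv_lt_0_compat; lra.
Qed.

Lemma jackson_mono i d : jackson q (fun t => Cscal (t ^ i) d) = Cscal (/ qnum q (S i)) d.
Proof.
pose proof (pow_lt_1_compat q (S i) Hq (Nat.lt_0_succ i)) as Hqi.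
assert (HG : infinite_sum (fun j => (q ^ S i) ^ j) (/ (1 - q ^ S i))).
{ apply inf_ext with (fun j => 1 * (q ^ S i) ^ j); [|intros; ring].
  apply GP_infinite. rewrite Rabs_right; lra. }
destruct d as [d1 d2]; unfold jackson, Cscal; simpl.
rewrite (Rseries_eq _ (d1 * / (1 - q ^ S i))), (Rseries_eq _ (d2 * / (1 - q ^ S i))).
- unfold qnum. f_equal; field; split; lra.
- apply inf_ext with (fun j => d2 * (q ^ S i) ^ j); [apply is_sum_scal; exact HG|].
  intros j. rewrite <- pow_comb. ring.
- apply inf_ext with (fun j => d1 * (q ^ S i) ^ j); [apply is_sum_scal; exact HG|].
  intros j. rewrite <- pow_comb. ring.
Qed.

Lemma Cscal_comp a b d : Cscal a (Cscal b d) = Cscal (a * b) d.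
Proof. destruct d; unfold Cscal; simpl; f_equal; ring. Qed.

Lemma Jk_mono k : forall i d, jackson_multi q k (fun t => Cscal (t ^ i) d) =
  Cscal (/ qnum q (S i) ^ k) d.
Proof.
induction k as [|k IH]; intros i d; cbn [jackson_multi].
- rewrite pow1; simpl pow; rewrite Rinv_1; reflexivity.
- replace (fun x => jackson_multi q k (fun y => Cscal ((x * y) ^ i) d))
    with (fun x => Cscal (x ^ i) (Cscal (/ qnum q (S i) ^ k) d)).
  + rewrite jackson_mono, Cscal_comp, <- Rinv_mult. reflexivity.
  + apply functional_extensionality; intros x.
    replace (fun y => Cscal ((x * y) ^ i) d) with (fun y => Cscal (y ^ i) (Cscal (x ^ i) d)).
    * rewrite IH, !Cscal_comp. f_equal; ring.
    * apply functional_extensionality; intros y. rewrite Cscal_comp, Rpow_mult_distr.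
      f_equal; ring.
Qed.

Lemma Jk_zero k : jackson_multi q k (fun _ => C0) = C0.
Proof.
replace (fun _ : R => C0) with (fun t => Cscal (t ^ 0) C0).
- rewrite Jk_mono. apply injective_projections; unfold Cscal, C0, RtoC; simpl; ring.
- apply functional_extensionality; intros t. apply injective_projections; unfold Cscal, C0, RtoC; simpl; ring.
Qed.

Lemma bnd0 : bnd (fun _ => C0) 0.
Proof. intros t _; unfold C0, RtoC; simpl; rewrite Rabs_R0; lra. Qed.

Lemma Jk_scal k c F : bounded F ->
  jackson_multi q k (fun t => Cmul c (F t)) = Cmul c (jackson_multi q k F).
Proof.
intros [M HF].
replace (fun t => Cmul c (F t)) with (fun t => Cadd (Cmul c (F t)) ((fun _ => C0) t)).
- rewrite (Jk_lin k c F (fun _ => C0) M 0 HF bnd0), Jk_zero.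
  destruct (Cmul c _); unfold Cadd, C0, RtoC; simpl; f_equal; ring.
- apply functional_extensionality; intros t; destruct (Cmul c (F t)); unfold Cadd, C0, RtoC; simpl;
  f_equal; ring.
Qed.

Lemma Jk_add k F G : bounded F -> bounded G ->
  jackson_multi q k (fun t => Cadd (F t) (G t)) = Cadd (jackson_multi q k F) (jackson_multi q k G).
Proof.
intros [M1 HF] [M2 HG].
replace (fun t => Cadd (F t) (G t)) with (fun t => Cadd (Cmul Defs.C1 (F t)) (G t)).
- rewrite (Jk_lin k Defs.C1 F G M1 M2 HF HG). f_equal.
  destruct (jackson_multi q k F); unfold Cmul, Defs.C1, RtoC; simpl; f_equal; ring.
- apply functional_extensionality; intros t; f_equal.
  destruct (F t); unfold Cmul, Defs.C1, RtoC; simpl; f_equal; ring.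
Qed.

Lemma Jk_sum k (F : nat -> R -> Cx) (c : nat -> Cx) n : (forall m, bounded (F m)) ->
  jackson_multi q k (fun t => Csum (fun m => Cmul (c m) (F m t)) n) =
  Csum (fun m => Cmul (c m) (jackson_multi q k (F m))) n.
Proof.
intros HF. induction n as [|n IH]; cbn [Csum].
- apply Jk_scal; apply HF.
- rewrite (Jk_add k (fun t => Csum (fun m => Cmul (c m) (F m t)) n) (fun t => Cmul (c (S n)) (F (S n) t))).
  + rewrite IH, Jk_scal; [reflexivity|apply HF].
  + apply bounded_Csum; intros m; apply bounded_mul; [apply bounded_const|apply HF].
  + apply bounded_mul; [apply bounded_const|apply HF].
Qed.
End Q.
End Jack.

Module FPS.
Import all_boot all_order all_algebra.
Local Set Implicit Arguments. Local Unset Strict Implicit.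
Import GRing.Theory.

Ltac sring := ring.
Ltac sfield := field.

Definition CC : Type := Cx.
HB.instance Definition _ := boolp.gen_eqMixin CC.
HB.instance Definition _ := boolp.gen_choiceMixin CC.
Local Open Scope R_scope.
Lemma CaddA : associative (Cadd : CC -> CC -> CC).
Proof. move=> [a b] [c d] [e f]; rewrite /Cadd /=; f_equal; ring. Qed.
Lemma CaddC : commutative (Cadd : CC -> CC -> CC).
Proof. move=> [a b] [c d]; rewrite /Cadd /=; f_equal; ring. Qed.
Lemma Cadd0 : left_id (Defs.C0 : CC) Cadd.
Proof. move=> [a b]; rewrite /Cadd /=; f_equal; ring. Qed.
Lemma CaddN : left_inverse (Defs.C0 : CC) Copp Cadd.
Proof. move=> [a b]; rewrite /Cadd /Defs.C0 /RtoC /=; f_equal; ring. Qed.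
HB.instance Definition _ := GRing.isZmodule.Build CC CaddA CaddC Cadd0 CaddN.
Lemma CmulA : associative (Cmul : CC -> CC -> CC).
Proof. move=> [a b] [c d] [e f]; rewrite /Cmul /=; f_equal; ring. Qed.
Lemma CmulC : commutative (Cmul : CC -> CC -> CC).
Proof. move=> [a b] [c d]; rewrite /Cmul /=; f_equal; ring. Qed.
Lemma Cmul1 : left_id (Defs.C1 : CC) Cmul.
Proof. move=> [a b]; rewrite /Cmul /Defs.C1 /RtoC /=; f_equal; ring. Qed.
Lemma CmulDl : left_distributive (Cmul : CC -> CC -> CC) Cadd.
Proof. move=> [a b] [c d] [e f]; rewrite /Cmul /Cadd /=; f_equal; ring. Qed.
Lemma C1n0 : (Defs.C1 : CC) != Defs.C0.
Proof. apply/eqP; rewrite /Defs.C1 /Defs.C0 /RtoC; case; exact: R1_neq_R0. Qed.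
HB.instance Definition _ := GRing.Zmodule_isComNzRing.Build CC CmulA CmulC Cmul1 CmulDl C1n0.

Lemma CscalE (r : R) (a : CC) : Cscal r a = Cmul (RtoC r) a.
Proof. case: a => a b; rewrite /Cscal /Cmul /RtoC /=; f_equal; ring. Qed.
Lemma RtoC_add (r s : R) : (RtoC (r + s) : CC) = Cadd (RtoC r) (RtoC s).
Proof. rewrite /Cadd /RtoC /=; f_equal; ring. Qed.
Lemma RtoC_mul (r s : R) : (RtoC (r * s) : CC) = Cmul (RtoC r) (RtoC s).
Proof. rewrite /Cmul /RtoC /=; f_equal; ring. Qed.
Lemma RtoC_opp (r : R) : (RtoC (- r) : CC) = Copp (RtoC r).
Proof. rewrite /Copp /RtoC /=; f_equal; ring. Qed.

Lemma fact_inv_S j : / INR (fact (S j)) * INR (S j) = / INR (fact j).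
Proof.
have H1 := INR_fact_neq_0 j. have H2 : INR (S j) <> 0 by apply: not_0_INR.
rewrite fact_simpl mult_INR; field; split => //.
Qed.

Lemma cc_real rho j : rho <> R0 ->
  pow (- / rho) (S j) * INR (fact (S j)) * - rho = pow (- / rho) j * INR (fact j) * INR (S j).
Proof. move=> H; rewrite fact_simpl mult_INR /=; field; exact: H. Qed.

Lemma part1_real n k rho Q : rho <> 0 -> Q <> 0 ->
  / Q ^ k * ((- / rho) ^ n * INR (fact n)) * (-1) ^ n = INR (fact n) / (rho ^ n * Q ^ k).
Proof.
move=> H1 H2.
have E : (- / rho) ^ n * (-1) ^ n = / rho ^ n.
  by rewrite -Rpow_mult_distr -pow_inv; f_equal; field.
have P1 := pow_nonzero rho n H1. have P2 := pow_nonzero Q k H2.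
transitivity (/ Q ^ k * INR (fact n) * ((- / rho) ^ n * (-1) ^ n)); first ring.
rewrite E; field; split => //.
Qed.

Lemma pt_real rho P n : pow (/ rho * P) n = P ^ n * / rho ^ n.
Proof. by rewrite Rpow_mult_distr pow_inv Rmult_comm. Qed.

Lemma pt_real3 rho P n : pow (- (/ rho * P)) n = P ^ n * ((-1) ^ n / rho ^ n).
Proof.
rewrite (_ : - (/ rho * P) = (-1) * (/ rho * P)); last by ring.
by rewrite !Rpow_mult_distr pow_inv; unfold Rdiv; ring.
Qed.

Import ring.
Local Open Scope ring_scope.

Lemma RtoC0 : RtoC R0 = 0 :> CC. Proof. by []. Qed.
Lemma RtoC1 : RtoC R1 = 1 :> CC. Proof. by []. Qed.
Lemma RtoC_nat n : RtoC (INR n) = n%:R :> CC.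
Proof.
elim: n => [|n IH] //. rewrite S_INR RtoC_add IH -[RHS]natr1. by [].
Qed.
Lemma RtoC_pow (r : R) n : RtoC (pow r n) = (RtoC r : CC) ^+ n.
Proof. elim: n => [|n IH] //=. by rewrite RtoC_mul IH exprS. Qed.

Lemma CsumE (F : nat -> CC) n : Csum F n = \sum_(i < n.+1) F i.
Proof. elim: n => [|n IH] /=; first by rewrite big_ord1.
by rewrite big_ord_recr /= IH. Qed.
Definition Pn (N : nat) (f : fps) : {poly CC} := \poly_(i < N) (f i : CC).
Definition D (f : fps) : nat -> CC := fun n => n.+1%:R * (f n.+1 : CC).

Lemma PnE N f i : (i < N)%N -> (Pn N f)`_i = f i.
Proof. by move=> H; rewrite /Pn coef_poly H. Qed.

Lemma mulE (f g : fps) n : fps_mul f g n = \sum_(i < n.+1) (f i : CC) * g (n - i)%N.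
Proof. by rewrite /fps_mul CsumE. Qed.

Lemma mul_P' (f g : fps) (p q : {poly CC}) m :
  (forall i, (i <= m)%N -> p`_i = f i) -> (forall i, (i <= m)%N -> q`_i = g i) ->
  fps_mul f g m = (p * q)`_m.
Proof.
move=> Hp Hq; rewrite mulE coefM; apply: eq_bigr => i _.
rewrite Hp ?Hq //; [exact: leq_subr | exact: (ltn_ord i)].
Qed.

Lemma PnE' N f m : (m < N)%N -> forall i, (i <= m)%N -> (Pn N f)`_i = f i.
Proof. move=> Hm i Hi; apply: PnE; exact: leq_ltn_trans Hm. Qed.
Arguments PnE' {N f m}.

Lemma mulC (f g : fps) n : fps_mul f g n = fps_mul g f n.
Proof.
rewrite (mul_P' (PnE' (ltnSn n)) (PnE' (ltnSn n))).
by rewrite (mul_P' (PnE' (ltnSn n)) (PnE' (ltnSn n))) mulrC.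
Qed.

Lemma mulA (f g h : fps) n : fps_mul f (fps_mul g h) n = fps_mul (fps_mul f g) h n.
Proof.
have H1 : forall i, (i <= n)%N -> (Pn n.+1 g * Pn n.+1 h)`_i = fps_mul g h i.
  move=> i Hi; symmetry; apply: mul_P'; apply: PnE'; exact: Hi.
have H2 : forall i, (i <= n)%N -> (Pn n.+1 f * Pn n.+1 g)`_i = fps_mul f g i.
  move=> i Hi; symmetry; apply: mul_P'; apply: PnE'; exact: Hi.
rewrite (mul_P' (PnE' (ltnSn n)) H1) (mul_P' H2 (PnE' (ltnSn n))).
by rewrite mulrA.
Qed.

Lemma D_mul (f g : fps) n : D (fps_mul f g) n = (fps_mul (D f) g n : CC) + fps_mul f (D g) n.
Proof.
have Hd : forall (h : fps) i, (i <= n)%N -> ((Pn n.+2 h)^`())`_i = D h i.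
  move=> h i Hi; rewrite coef_deriv PnE; last by rewrite ltnS ltnS.
  by rewrite /D mulr_natl.
have Hn : (n < n.+2)%N by exact: leqW (ltnSn n).
rewrite (mul_P' (Hd f) (PnE' Hn)) (mul_P' (PnE' Hn) (Hd g)).
rewrite -coefD -derivM coef_deriv /D mulr_natl.
by rewrite (mul_P' (PnE' (ltnSn n.+1)) (PnE' (ltnSn n.+1))).
Qed.

Lemma RtoC_mulM (r s : R) : RtoC (Rmult r s) = (RtoC r : CC) * RtoC s.
Proof. exact: RtoC_mul. Qed.
Lemma RtoC_addM (r s : R) : RtoC (Rplus r s) = (RtoC r : CC) + RtoC s.
Proof. exact: RtoC_add. Qed.
Lemma RtoC_oppM (r : R) : RtoC (Ropp r) = - (RtoC r : CC).
Proof. exact: RtoC_opp. Qed.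
Lemma CscalM (r : R) (a : CC) : Cscal r a = (RtoC r : CC) * a.
Proof. exact (CscalE r a). Qed.

Lemma sum_widen (F : nat -> CC) a b : (a <= b)%N -> (forall j, (a < j)%N -> F j = 0) ->
  \sum_(j < a.+1) F j = \sum_(j < b.+1) F j.
Proof.
move=> Hab HF; rewrite (big_ord_widen _ _ (Hab : (a.+1 <= b.+1)%N)) big_mkcond.
apply: eq_bigr => j _; case: ifP => // /negbT; rewrite -leqNgt => H; rewrite HF //.
Qed.

Lemma pow_P' N (f : fps) j m : (m < N)%N -> fps_pow f j m = ((Pn N f)^+j)`_m.
Proof.
elim: j m => [|j IH] m Hm /=.
  by rewrite expr0 coef1; case: m Hm.
rewrite (@mul_P' _ _ ((Pn N f)^+j) (Pn N f) m) ?exprSr //.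
  by move=> i Hi; rewrite IH //; exact: leq_ltn_trans Hm.
exact: PnE'.
Qed.

Lemma D_pow (f : fps) j n : D (fps_pow f j.+1) n = j.+1%:R * (fps_mul (D f) (fps_pow f j) n : CC).
Proof.
have Hd : forall i, (i <= n)%N -> ((Pn n.+2 f)^`())`_i = D f i.
  move=> i Hi; rewrite coef_deriv PnE; last by rewrite ltnS ltnS.
  by rewrite /D mulr_natl.
have Hp : forall i, (i <= n)%N -> ((Pn n.+2 f)^+j)`_i = fps_pow f j i.
  move=> i Hi; rewrite (@pow_P' n.+2) //; rewrite ltnS; exact: leqW.
rewrite (mul_P' Hd Hp) /D (@pow_P' n.+2) //.
by rewrite mulr_natl -coef_deriv deriv_exp /= coefMn mulr_natl.
Qed.

Lemma pow_vanish (f : fps) j m : f O = 0 :> CC -> (m < j)%N -> fps_pow f j m = 0 :> CC.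
Proof.
move=> f0; elim: j m => [|j IH] m Hm //=.
rewrite mulE; apply: big1 => i _.
have Hi : (i <= m)%N by rewrite -ltnS.
case: (ltnP i j) => Hij; first by rewrite IH // mul0r.
have -> : (m - i = 0)%N by apply/eqP; rewrite subn_eq0; exact: (leq_trans (Hm : (m <= j)%N) Hij).
by rewrite f0 mulr0.
Qed.

Definition cf (j : nat) : CC := RtoC (Rinv (INR (fact j))).

Lemma cfS j : cf j.+1 * j.+1%:R = cf j.
Proof. by rewrite /cf -RtoC_nat -RtoC_mulM fact_inv_S. Qed.

Lemma expE (f : fps) n : fps_exp f n = \sum_(j < n.+1) cf j * (fps_pow f j n : CC).
Proof. by rewrite /fps_exp CsumE; apply: eq_bigr => j _; rewrite CscalM. Qed.

Lemma D_exp (f : fps) n : f O = 0 :> CC -> D (fps_exp f) n = fps_mul (D f) (fps_exp f) n.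
Proof.
move=> f0.
rewrite mulE.
have Hw : forall i : 'I_n.+1, (D f i : CC) * fps_exp f (n - i)%N =
   \sum_(j < n.+1) D f i * (cf j * (fps_pow f j (n - i)%N : CC)).
  move=> i; rewrite expE -big_distrr /=; congr (_ * _).
  apply: (@sum_widen (fun j => cf j * (fps_pow f j (n - i)%N : CC))); first exact: leq_subr.
  by move=> j Hj; rewrite pow_vanish // mulr0.
rewrite (eq_bigr _ (fun i _ => Hw i)).
rewrite exchange_big /=.
have HL : D (fps_exp f) n = \sum_(j < n.+1) cf j.+1 * D (fps_pow f j.+1) n.
  rewrite /D expE big_ord_recl /= mulr0 add0r big_distrr /=.
  by apply: eq_bigr => j _; rewrite mulrCA.
rewrite HL; apply: eq_bigr => j _.
rewrite D_pow mulrA cfS mulE big_distrr /=.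
by apply: eq_bigr => i _; rewrite mulrCA.
Qed.

Lemma mul_ext (f f' g g' : fps) n : (forall i, (i <= n)%N -> f i = f' i :> CC) ->
  (forall i, (i <= n)%N -> g i = g' i :> CC) -> fps_mul f g n = fps_mul f' g' n.
Proof.
move=> Hf Hg; rewrite !mulE; apply: eq_bigr => i _.
rewrite Hf ?Hg //; [exact: leq_subr | exact: (ltn_ord i)].
Qed.

Lemma mul_scal_l (c : CC) (f g : fps) n :
  fps_mul (fun i => c * (f i : CC)) g n = c * (fps_mul f g n : CC).
Proof. rewrite !mulE big_distrr /=; apply: eq_bigr => i _; by rewrite mulrA. Qed.

Lemma mul_add_l (f f' g : fps) n :
  fps_mul (fun i => (f i : CC) + f' i) g n = (fps_mul f g n : CC) + fps_mul f' g n.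
Proof. rewrite !mulE -big_split /=; apply: eq_bigr => i _; by rewrite mulrDl. Qed.

Lemma mul_scal_r (c : CC) (f g : fps) n :
  fps_mul f (fun i => c * (g i : CC)) n = c * (fps_mul f g n : CC).
Proof. rewrite !mulE big_distrr /=; apply: eq_bigr => i _; by rewrite mulrCA. Qed.

Lemma mul_add_r (f g g' : fps) n :
  fps_mul f (fun i => (g i : CC) + g' i) n = (fps_mul f g n : CC) + fps_mul f g' n.
Proof. rewrite !mulE -big_split /=; apply: eq_bigr => i _; by rewrite mulrDr. Qed.

Lemma mul_one_l (f : fps) n : fps_mul fps_one f n = f n.
Proof.
rewrite mulE big_ord_recl /= subn0 big1 ?addr0; first exact: (@mul1r CC (f n)).
by move=> i _; exact: (@mul0r CC).
Qed.

Lemma one0 : fps_one O = 1 :> CC. Proof. by []. Qed.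
Lemma oneS n : fps_one n.+1 = 0 :> CC. Proof. by []. Qed.

Lemma D_one n : D fps_one n = 0.
Proof. by rewrite /D oneS mulr0. Qed.

Lemma D_X n : D fps_X n = fps_one n.
Proof. by rewrite /D; case: n => [|n] /=; rewrite ?mulr1 ?mulr0. Qed.

Lemma D_scal (c : CC) (f : fps) n : D (fun i => c * (f i : CC)) n = c * D f n.
Proof. by rewrite /D mulrCA. Qed.

Lemma D_add (f g : fps) n : D (fun i => (f i : CC) + g i) n = D f n + D g n.
Proof. by rewrite /D mulrDr. Qed.

Lemma pow0 (f : fps) j : f O = 0 :> CC -> fps_pow f j O = (j == 0)%:R :> CC.
Proof. by move=> f0; case: j => [|j] //; rewrite pow_vanish. Qed.

Lemma exp0 (f : fps) : fps_exp f O = 1 :> CC.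
Proof. by rewrite expE big_ord1 /= /cf /= Rinv_1 mul1r. Qed.

Lemma fact_S_C n : RtoC (INR (fact n.+1)) = (RtoC (INR (fact n)) : CC) * n.+1%:R.
Proof. by rewrite fact_simpl mult_INR RtoC_mulM RtoC_nat mulrC. Qed.

Lemma mul_D_fact (F : fps) n :
  Cscal (INR (fact n.+1)) (F n.+1) = (RtoC (INR (fact n)) : CC) * D F n.
Proof. by rewrite CscalM fact_S_C /D mulrA. Qed.

Lemma D_sub (f g : fps) n : D (fun i => (f i : CC) - (g i : CC)) n = D f n - D g n.
Proof. by rewrite /D mulrBr. Qed.

Lemma D_ext (f g : fps) n : (forall i, f i = g i) -> D f n = D g n.
Proof. by move=> H; rewrite /D H. Qed.

Lemma cf0 : cf 0 = 1.
Proof. by rewrite /cf /= Rinv_1. Qed.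

Lemma cfS' m : m.+1%:R * cf m.+1 = cf m.
Proof. by rewrite mulrC cfS. Qed.

Section S2rec.
Variable x : CC.
Let Ex2 := fps_exp (fps_cscal x fps_X).
Let H := fps_sub (fps_exp fps_X) fps_one.
Let Hm m := fps_rscal (/ INR (fact m)) (fps_pow H m).
Let P m := fps_mul Ex2 (Hm m).

Lemma H0 : H O = 0 :> CC.
Proof. by rewrite /H /fps_sub /= -[Csub _ _]/((fps_exp fps_X O : CC) - 1) exp0 subrr. Qed.

Lemma HmE m i : Hm m i = cf m * (fps_pow H m i : CC).
Proof. exact: CscalM. Qed.

Lemma DEx2 i : D Ex2 i = x * (Ex2 i : CC).
Proof.
rewrite /Ex2 D_exp; last exact: (@mulr0 CC x).
rewrite (@mul_ext _ (fun j => x * (fps_one j : CC)) _ (fps_exp (fps_cscal x fps_X))) //.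
  by rewrite mul_scal_l mul_one_l.
move=> j _; rewrite -[D (fps_cscal x fps_X) j]/(D (fun i => x * (fps_X i : CC)) j).
by rewrite D_scal D_X.
Qed.

Lemma DH i : D H i = (H i : CC) + fps_one i.
Proof.
rewrite -[D H i]/(D (fun i => (fps_exp fps_X i : CC) - (fps_one i : CC)) i) D_sub D_one subr0.
rewrite D_exp // (@mul_ext _ fps_one _ (fps_exp fps_X)) //; last by move=> j _; rewrite D_X.
rewrite mul_one_l /H /fps_sub.
by rewrite -[Csub _ _]/((fps_exp fps_X i : CC) - (fps_one i : CC)) subrK.
Qed.

Lemma DHm m i : D (Hm m) i = m%:R * (Hm m i : CC) + (if m is m'.+1 then Hm m' i else 0).
Proof.
case: m => [|m].
  rewrite mul0r add0r (@D_ext _ (fun j => cf 0 * (fps_pow H 0 j : CC))); last exact: HmE.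
  by rewrite D_scal /= D_one mulr0.
rewrite (@D_ext _ (fun j => cf m.+1 * (fps_pow H m.+1 j : CC))); last exact: HmE.
rewrite D_scal D_pow mulrA cfS !HmE.
rewrite (@mul_ext _ (fun j => (H j : CC) + fps_one j) _ (fps_pow H m)) //; last first.
  by move=> j _; rewrite DH.
rewrite mul_add_l mul_one_l mulC /= mulrA cfS' mulrDr.
by [].
Qed.

Lemma DP m n : D (P m) n = (x + m%:R) * (P m n : CC) + (if m is m'.+1 then P m' n else 0).
Proof.
rewrite D_mul.
rewrite (@mul_ext _ (fun j => x * (Ex2 j : CC)) _ (Hm m)) //; last by move=> j _; rewrite DEx2.
rewrite mul_scal_l.
rewrite (@mul_ext Ex2 Ex2 (D (Hm m)) (fun j => m%:R * (Hm m j : CC) + (if m is m'.+1 then Hm m' j else 0))) //;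
  last by move=> j _; rewrite DHm.
rewrite mul_add_r mul_scal_r.
case: m => [|m]; rewrite /P; last by ring.
have -> : fps_mul Ex2 (fun _ : nat => 0 : CC) n = 0 :> CC.
  by rewrite mulE; apply: big1 => i _; exact: mulr0.
ring.
Qed.

Lemma S2_rec n m : S2w n.+1 m x = (x + m%:R) * (S2w n m x : CC) + (if m is m'.+1 then S2w n m' x else 0) :> CC.
Proof.
rewrite -[S2w n.+1 m x]/(Cscal (INR (fact n.+1)) (P m n.+1)) mul_D_fact DP.
rewrite -[S2w n m x]/(Cscal (INR (fact n)) (P m n)) CscalM.
case: m => [|m]; first by rewrite !addr0 mulrCA.
rewrite -[S2w n m x]/(Cscal (INR (fact n)) (P m n)) CscalM; ring.
Qed.

Lemma S2_0 m : S2w O m x = (m == 0)%:R :> CC.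
Proof.
rewrite -[S2w O m x]/(Cscal (INR (fact O)) (P m O)) CscalM /= mul1r.
rewrite /P mulE big_ord1 /= /Ex2 exp0 mul1r HmE pow0; last exact: H0.
by case: m => [|m] /=; rewrite ?cf0 ?mulr1 ?mulr0.
Qed.
End S2rec.

Lemma mul_const_l (c : CC) (h : fps) n :
  fps_mul (fun _ => c) h n = c * \sum_(i < n.+1) (h i : CC).
Proof.
rewrite mulE big_distrr /= (reindex_inj rev_ord_inj) /=.
by apply: eq_bigr => i _; rewrite subSS subKn //; exact: (ltn_ord i).
Qed.

Lemma D_sum (F : fps) (h : nat -> CC) :
  (forall n, D F n = \sum_(i < n.+1) h i) -> forall n, D F n = n%:R * (F n : CC) + h n.
Proof.
move=> HD n; rewrite HD big_ord_recr /=; congr (_ + _).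
case: n => [|n]; first by rewrite big_ord0 mul0r.
by rewrite -HD.
Qed.

Section S1rec.
Variable x : CC.
Let L := fps_mlog1m.
Let Ex := fps_cscal x L.
Let E := fps_exp Ex.
Let Lm m := fps_rscal (/ INR (fact m)) (fps_pow L m).
Let Q m := fps_mul E (Lm m).
Let G : fps := fun _ => (1 : CC).

Lemma L0 : L O = 0 :> CC. Proof. by []. Qed.

Lemma DL i : D L i = 1.
Proof.
rewrite /D -[L i.+1]/(RtoC (/ INR i.+1)) -RtoC_nat -RtoC_mulM Rinv_r //.
exact: not_0_INR.
Qed.

Lemma DE i : D E i = fps_mul (fun _ => x) E i.
Proof.
rewrite /E D_exp; last exact: (@mulr0 CC x).
apply: mul_ext => // j _.
rewrite -[D Ex j]/(D (fun i => x * (L i : CC)) j) D_scal DL; exact: (@mulr1 CC x).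
Qed.

Lemma LmE m i : Lm m i = cf m * (fps_pow L m i : CC).
Proof. exact: CscalM. Qed.

Lemma DLm m i : D (Lm m) i = if m is m'.+1 then fps_mul G (Lm m') i else 0.
Proof.
rewrite (@D_ext _ (fun j => cf m * (fps_pow L m j : CC))); last exact: LmE.
rewrite D_scal; case: m => [|m]; first by rewrite D_one mulr0.
rewrite D_pow mulrA cfS (@mul_ext _ G _ (fps_pow L m)) //; first last.
- by move=> j _; rewrite DL.
rewrite (@mul_ext G G (Lm m) (fun j => cf m * (fps_pow L m j : CC))) //; last by move=> j _; rewrite LmE.
by rewrite mul_scal_r.
Qed.
Lemma DQ m n : D (Q m) n =
  \sum_(i < n.+1) (x * (Q m i : CC) + (if m is m'.+1 then Q m' i else 0)).
Proof.
rewrite D_mul big_split /= -big_distrr /=.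
rewrite (@mul_ext (D E) (fps_mul (fun _ => x) E) (Lm m) (Lm m)) //; last by move=> j _; rewrite DE.
rewrite -mulA mul_const_l; congr (_ + _).
rewrite (@mul_ext E E (D (Lm m)) (fun j => if m is m'.+1 then fps_mul G (Lm m') j else (0 : CC))) //;
  last by move=> j _; rewrite DLm.
case: m => [|m].
  rewrite mulE big1; first by rewrite big1.
  by move=> i _; exact: mulr0.
rewrite mulA (@mul_ext (fps_mul E G) (fps_mul G E) (Lm m) (Lm m)) //; last by move=> j _; rewrite mulC.
by rewrite -mulA mul_const_l mul1r.
Qed.

Lemma S1_rec n m : S1w n.+1 m x =
  (n%:R + x) * (S1w n m x : CC) + (if m is m'.+1 then S1w n m' x else 0) :> CC.
Proof.
rewrite -[S1w n.+1 m x]/(Cscal (INR (fact n.+1)) (Q m n.+1)) mul_D_fact.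
rewrite (@D_sum (Q m) (fun i => x * (Q m i : CC) + (if m is m'.+1 then Q m' i else 0)) (DQ m)).
rewrite -[S1w n m x]/(Cscal (INR (fact n)) (Q m n)) CscalM.
case: m => [|m]; first by rewrite !addr0; ring.
rewrite -[S1w n m x]/(Cscal (INR (fact n)) (Q m n)) CscalM; ring.
Qed.

Lemma S1_0 m : S1w O m x = (m == 0)%:R :> CC.
Proof.
rewrite -[S1w O m x]/(Cscal (INR (fact O)) (Q m O)) CscalM /= mul1r.
rewrite /Q mulE big_ord1 /= /E exp0 mul1r LmE pow0; last exact: L0.
by case: m => [|m] /=; rewrite ?cf0 ?mulr1 ?mulr0.
Qed.
End S1rec.

Section Vsec.
Variable rho : R.
Hypothesis rho0 : rho <> R0.
Variable z : CC.
Let w := fps_w rho.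
Let ER := fps_exp (fps_rscal (- rho) fps_X).
Let e := fps_exp (fps_cscal (Copp z) fps_X).
Let V j := fps_mul (fps_pow w j) e.
Let r : CC := RtoC rho.
Let ri : CC := RtoC (/ rho).

Lemma rri : r * ri = 1.
Proof. by rewrite /r /ri -RtoC_mulM Rinv_r. Qed.

Lemma wE i : w i = ri * ((fps_one i : CC) - (ER i : CC)).
Proof. exact: CscalM. Qed.

Lemma w0 : w O = 0 :> CC.
Proof. by rewrite wE /ER exp0 subrr mulr0. Qed.

Lemma DER i : D ER i = (RtoC (- rho) : CC) * (ER i : CC).
Proof.
rewrite /ER D_exp; last by rewrite /fps_rscal /= CscalM mulr0.
rewrite (@mul_ext _ (fun j => (RtoC (- rho) : CC) * (fps_one j : CC)) _ (fps_exp (fps_rscal (- rho) fps_X))) //.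
  by rewrite mul_scal_l mul_one_l.
move=> j _; rewrite (@D_ext _ (fun i => (RtoC (- rho) : CC) * (fps_X i : CC))); last by move=> k; exact: CscalM.
by rewrite D_scal D_X.
Qed.

Lemma Dw i : D w i = (fps_one i : CC) - r * (w i : CC).
Proof.
rewrite (@D_ext _ (fun j => ri * ((fps_one j : CC) - (ER j : CC)))); last exact: wE.
rewrite D_scal D_sub D_one DER wE mulrA rri mul1r RtoC_oppM.
have H1 : ri * r = 1 by rewrite mulrC rri.
have -> : ri * (0 - - r * (ER i : CC)) = (ri * r) * ER i by ring.
rewrite H1 mul1r; ring.
Qed.

Lemma De i : D e i = - z * (e i : CC).
Proof.
rewrite /e D_exp; last exact: (@mulr0 CC).
rewrite (@mul_ext _ (fun j => - z * (fps_one j : CC)) _ (fps_exp (fps_cscal (Copp z) fps_X))) //.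
  by rewrite mul_scal_l mul_one_l.
move=> j _; rewrite -[D (fps_cscal (Copp z) fps_X) j]/(D (fun i => - z * (fps_X i : CC)) j).
by rewrite D_scal D_X.
Qed.

Lemma DV j n : D (V j) n =
  (if j is j'.+1 then j%:R * (V j' n : CC) else 0) - (j%:R * r + z) * (V j n : CC).
Proof.
rewrite D_mul.
rewrite (@mul_ext (fps_pow w j) (fps_pow w j) (D e) (fun i => - z * (e i : CC))) //;
  last by move=> i _; rewrite De.
rewrite mul_scal_r.
case: j => [|j].
  rewrite (@mul_ext (D (fps_pow w 0)) (fun _ => 0 : CC) e e) //; last by move=> i _; rewrite /= D_one.
  have -> : fps_mul (fun _ => 0 : CC) e n = 0 :> CC by rewrite mulE; apply: big1 => i _; exact: mul0r.
  rewrite /V /=; ring.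
rewrite (@mul_ext (D (fps_pow w j.+1)) (fun i => j.+1%:R * (fps_pow w j i : CC) - j.+1%:R * (r * (fps_pow w j.+1 i : CC))) e e) //; last first.
  move=> i _; rewrite D_pow.
  rewrite (@mul_ext (D w) (fun k => (fps_one k : CC) + (- r) * (w k : CC)) (fps_pow w j) (fps_pow w j)) //;
    last by move=> k _; rewrite Dw mulNr.
  rewrite mul_add_l mul_one_l mul_scal_l mulC /=; ring.
have -> : fps_mul (fun i => j.+1%:R * (fps_pow w j i : CC) - j.+1%:R * (r * (fps_pow w j.+1 i : CC))) e n
   = j.+1%:R * (V j n : CC) - j.+1%:R * (r * (V j.+1 n : CC)) :> CC.
  rewrite (@mul_ext _ (fun i => (j.+1%:R * (fps_pow w j i : CC)) + (- (j.+1%:R * r)) * (fps_pow w j.+1 i : CC)) e e) //;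
    last by move=> i _; ring.
  rewrite mul_add_l !mul_scal_l /V; ring.
rewrite /V; ring.
Qed.

Definition cc (j : nat) : CC := RtoC (Rmult (pow (Ropp (Rinv rho)) j) (INR (fact j))).
Definition dd (m : nat) : CC := RtoC (pow (Ropp rho) m).

Lemma ccS j : cc j.+1 * RtoC (- rho) = cc j * j.+1%:R.
Proof. by rewrite /cc -RtoC_nat -!RtoC_mulM cc_real. Qed.

Lemma ddS m : dd m.+1 = dd m * RtoC (- rho).
Proof. by rewrite /dd -RtoC_mulM /= Rmult_comm. Qed.
Lemma key_lemma (A B D' S S' j1 u a y v : CC) :
  A * a = B * j1 -> a * y = - v -> a = - u ->
  j1 * (B * D' * S') - (j1 * u + v) * (A * D' * S) = A * (D' * a) * ((y + j1) * S + S').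
Proof.
move=> H1 H2 H3.
have -> : A * (D' * a) * ((y + j1) * S + S') =
  (A * a) * D' * S' + A * D' * S * (a * y) + A * D' * S * j1 * a by ring.
by rewrite H1 H2 H3; ring.
Qed.

Lemma ax : (RtoC (- rho) : CC) * (Cscal (/ rho) z : CC) = - z.
Proof. by rewrite CscalM mulrA -RtoC_mulM Ropp_mult_distr_l_reverse Rinv_r // RtoC_oppM mulN1r. Qed.

Lemma Vfact m j : (RtoC (INR (fact m)) : CC) * (V j m : CC) = cc j * dd m * (S2w m j (Cscal (/ rho) z) : CC).
Proof.
elim: m j => [|m IH] j.
  rewrite /= S2_0 /V mulE big_ord1 /= /e exp0 mulr1 pow0; last exact: w0.
  rewrite /dd /= mulr1 -[RtoC R1]/(1 : CC) mul1r.
  case: j => [|j] /=; last by rewrite mulr0.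
  by rewrite mulr1 /cc RtoC_mulM [RtoC (INR _)]/(1 : CC) mulr1.
rewrite fact_S_C -mulrA -[_ * (V j m.+1 : CC)]/(D (V j) m) DV S2_rec ddS.
set F : CC := RtoC (INR (fact m)).
case: j => [|j].
  have -> : F * (0 - (0%:R * r + z) * (V 0 m : CC)) = - z * (F * V 0 m) by ring.
  rewrite IH.
  have -> : cc 0 * (dd m * RtoC (- rho)) * (((Cscal (/ rho) z : CC) + 0%:R) * (S2w m 0 (Cscal (/ rho) z) : CC) + 0)
    = cc 0 * dd m * (S2w m 0 (Cscal (/ rho) z) : CC) * ((RtoC (- rho) : CC) * (Cscal (/ rho) z : CC)) by ring.
  rewrite ax; ring.
have -> : F * (j.+1%:R * (V j m : CC) - (j.+1%:R * r + z) * (V j.+1 m : CC)) =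
   j.+1%:R * (F * V j m) - (j.+1%:R * r + z) * (F * V j.+1 m) by ring.
rewrite !IH; apply: key_lemma; first exact: ccS.
  exact: ax.
exact: RtoC_oppM.
Qed.
End Vsec.

Lemma CfallS (y : CC) m : Cfall y m.+1 = (Cfall y m : CC) * (y - m%:R).
Proof. by rewrite /= -RtoC_nat. Qed.

Section Comb.
Variable x : CC.
Variables s1 s2 : nat -> nat -> CC.
Hypothesis h10 : forall m, s1 O m = (m == 0)%:R.
Hypothesis h1S : forall n m, s1 n.+1 m = (n%:R + x) * s1 n m + (if m is m'.+1 then s1 n m' else 0).
Hypothesis h20 : forall m, s2 O m = (m == 0)%:R.
Hypothesis h2S : forall n m, s2 n.+1 m = (x + m%:R) * s2 n m + (if m is m'.+1 then s2 n m' else 0).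

Lemma s1_van n m : (n < m)%N -> s1 n m = 0.
Proof.
elim: n m => [|n IH] m Hm; first by rewrite h10; case: m Hm.
rewrite h1S IH ?mulr0 ?add0r; last exact: ltnW.
by case: m Hm => [|m] // Hm; rewrite IH.
Qed.

Lemma s2_van n m : (n < m)%N -> s2 n m = 0.
Proof.
elim: n m => [|n IH] m Hm; first by rewrite h20; case: m Hm.
rewrite h2S IH ?mulr0 ?add0r; last exact: ltnW.
by case: m Hm => [|m] // Hm; rewrite IH.
Qed.

Lemma fall_id n (y : CC) : \sum_(m < n.+1) s2 n m * Cfall y m = (x + y) ^+ n.
Proof.
elim: n => [|n IH]; first by rewrite big_ord1 h20 mul1r expr0.
rewrite (eq_bigr (fun m : 'I_n.+2 => (x + m%:R) * s2 n m * Cfall y m +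
   (if (m : nat) is m'.+1 then s2 n m' else 0) * Cfall y m)); last first.
  by move=> m _; rewrite h2S mulrDl.
rewrite big_split /= big_ord_recr /= s2_van // mulr0 mul0r addr0.
rewrite [X in _ + X = _]big_ord_recl /= mul0r add0r.
rewrite -big_split /= exprS -IH big_distrr /=.
apply: eq_bigr => m _; rewrite add0n.
rewrite -[Cmul _ _]/((Cfall y m : CC) * (y - (RtoC (INR m) : CC))) RtoC_nat; ring.
Qed.

Lemma ortho n j : \sum_(m < n.+1) (-1) ^+ m * s1 n m * s2 m j = (-1) ^+ n * (j == n)%:R.
Proof.
elim: n j => [|n IH] j.
  by rewrite big_ord1 h10 h20 /= mulr1.
rewrite (eq_bigr (fun m : 'I_n.+2 => (n%:R + x) * ((-1) ^+ m * s1 n m * s2 m j) +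
   (-1) ^+ m * (if (m : nat) is m'.+1 then s1 n m' else 0) * s2 m j)); last first.
  move=> m _; rewrite h1S; set t := match _ with 0%N => _ | _.+1 => _ end; ring.
rewrite big_split /= big_ord_recr /= s1_van // mulr0 mul0r mulr0 addr0.
rewrite -big_distrr /= IH.
rewrite big_ord_recl /= mulr0 mul0r add0r.
rewrite (eq_bigr (fun m : 'I_n.+1 => - (x + j%:R) * ((-1) ^+ m * s1 n m * s2 m j) -
   (-1) ^+ m * s1 n m * (if j is j'.+1 then s2 m j' else 0))); last first.
  move=> m _; rewrite (_ : bump 0 m = m.+1) // h2S exprS ?add0n; set t := match j with 0%N => _ | _.+1 => _ end; ring.
rewrite big_split /= -big_distrr /= IH sumrN.
have Hz : (n%:R - j%:R) * (j == n)%:R = 0 :> CC.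
  by case: eqP => [->|_]; rewrite ?subrr ?mul0r ?mulr0.
case: j Hz => [|j] Hz.
  rewrite big1 ?oppr0 ?addr0; last by move=> m _; rewrite mulr0.
  have -> : (0%N == n.+1) = false by [].
  rewrite mulr0.
  transitivity ((-1) ^+ n * ((n%:R - 0) * (0%N == n)%:R) : CC); first ring.
  by rewrite Hz mulr0.
rewrite IH eqSS.
transitivity ((-1) ^+ n * ((n%:R - j.+1%:R) * (j.+1 == n)%:R) - (-1) ^+ n * (j == n)%:R : CC); first ring.
rewrite Hz mulr0 exprS; ring.
Qed.
End Comb.

Lemma Li_mul k rho q (z : CC) m :
  fps_mul (fps_Li_over_w k rho q) (fps_exp (fps_cscal (Copp z) fps_X)) m =
  \sum_(j < m.+1) (RtoC (/ (qnum q (S j)) ^ k) : CC) *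
     (fps_mul (fps_pow (fps_w rho) j) (fps_exp (fps_cscal (Copp z) fps_X)) m : CC).
Proof.
have w0' : fps_w rho O = 0 :> CC.
  by rewrite /fps_w /fps_rscal CscalM /fps_sub -[Csub _ _]/((fps_one O : CC) - (fps_exp (fps_rscal (- rho) fps_X) O : CC)) exp0 subrr mulr0.
rewrite mulE.
have Hw : forall i : 'I_m.+1, (fps_Li_over_w k rho q i : CC) * fps_exp (fps_cscal (Copp z) fps_X) (m - i)%N =
  \sum_(j < m.+1) (RtoC (/ (qnum q (S j)) ^ k) : CC) *
     ((fps_pow (fps_w rho) j i : CC) * fps_exp (fps_cscal (Copp z) fps_X) (m - i)%N).
  move=> i; rewrite /fps_Li_over_w CsumE big_distrl /=.
  rewrite (@sum_widen (fun j => (Cscal (/ qnum q j.+1 ^ k) (fps_pow (fps_w rho) j i) : CC) *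
              fps_exp (fps_cscal (Copp z) fps_X) (m - i)%N) i m); first last.
  - by move=> j Hj; rewrite CscalM pow_vanish // mulr0 mul0r.
  - by rewrite -ltnS.
  by apply: eq_bigr => j _; rewrite CscalM mulrA.
rewrite (eq_bigr _ (fun i _ => Hw i)) exchange_big /=.
by apply: eq_bigr => j _; rewrite -big_distrr /= mulE.
Qed.

Lemma dd_inv rho m : rho <> R0 -> (RtoC (/ rho ^ m) : CC) * dd rho m = (-1) ^+ m.
Proof.
move=> H; rewrite /dd -RtoC_mulM -pow_inv -Rpow_mult_distr.
rewrite (_ : Rmult (Rinv rho) (Ropp rho) = Ropp R1); last by sfield.
elim: m => [|m IH] //=; by rewrite RtoC_mulM IH RtoC_oppM exprS mulrC.
Qed.

Lemma part1 n k rho q (z : CC) : rho <> R0 -> qnum q (S n) <> R0 ->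
  Csum (fun m => Cmul (S1w n m (Cscal (/ rho) z))
                      (Cscal (/ rho ^ m) (qpolyBernoulli m k rho q z))) n
    = RtoC (INR (fact n) / (rho ^ n * (qnum q (S n)) ^ k)).
Proof.
move=> Hr Hq.
set x := Cscal (/ rho) z.
pose A j : CC := (RtoC (/ (qnum q (S j)) ^ k) : CC) * cc rho j.
have Hb : forall m, (Cscal (/ rho ^ m) (qpolyBernoulli m k rho q z) : CC) =
   \sum_(j < m.+1) A j * (-1) ^+ m * (S2w m j x : CC).
  move=> m; rewrite CscalM /qpolyBernoulli CscalM Li_mul big_distrr big_distrr /=.
  apply: eq_bigr => j _.
  set F : CC := RtoC (INR (fact m)).
  set V := fps_mul _ _ m.
  have -> : (RtoC (/ rho ^ m) : CC) * (F * ((RtoC (/ qnum q j.+1 ^ k) : CC) * (V : CC)))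
    = (RtoC (/ qnum q j.+1 ^ k) : CC) * ((RtoC (/ rho ^ m) : CC) * (F * V)) by ring.
  rewrite /F /V Vfact //.
  have -> : (RtoC (/ rho ^ m) : CC) * (cc rho j * dd rho m * (S2w m j (Cscal (/ rho) z) : CC))
    = cc rho j * ((RtoC (/ rho ^ m) : CC) * dd rho m) * (S2w m j (Cscal (/ rho) z) : CC) by ring.
  rewrite dd_inv // /A /x; ring.
rewrite CsumE.
have H2 := S2_rec x. have H20 := S2_0 x. have H1 := S1_rec x. have H10 := S1_0 x.
have Hw : forall m : 'I_n.+1, (Cmul (S1w n m x) (Cscal (/ rho ^ m) (qpolyBernoulli m k rho q z)) : CC)
   = \sum_(j < n.+1) A j * ((-1) ^+ m * (S1w n m x : CC) * (S2w m j x : CC)).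
  move=> m; rewrite -[Cmul _ _]/((S1w n m x : CC) * (Cscal (/ rho ^ m) (qpolyBernoulli m k rho q z) : CC)).
  rewrite Hb big_distrr /=.
  rewrite (@sum_widen (fun j => (S1w n m x : CC) * (A j * (-1) ^+ m * (S2w m j x : CC))) m n); first last.
  - move=> j Hj; rewrite (@s2_van x (fun n m => S2w n m x) H20 H2) //.
    by rewrite mulr0 mulr0.
  - by rewrite -ltnS.
  by apply: eq_bigr => j _; ring.
rewrite (eq_bigr _ (fun m _ => Hw m)) exchange_big /=.
under eq_bigr => j _ do rewrite -big_distrr /= (@ortho x (fun n m => S1w n m x) (fun n m => S2w n m x) H10 H1 H20 H2).
rewrite big_ord_recr /= big1; last first.
  by move=> j _; rewrite (_ : (j == n :> nat) = false) ?mulr0 //; apply/negbTE; rewrite neq_ltn ltn_ord.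
rewrite eqxx add0r mulr1 /A.
rewrite /cc (_ : (-1) ^+ n = RtoC (pow (Ropp R1) n) :> CC); last by rewrite RtoC_pow RtoC_oppM.
by rewrite -!RtoC_mulM part1_real.
Qed.

Lemma part2_pt n rho (z : CC) (P : R) :
  Csum (fun m => Cmul (S2w n m (Cscal (/ rho) z)) (Cfall (Cscal (/ rho) (Csub (RtoC P) z)) m)) n
  = Cscal (P ^ n) (RtoC (/ rho ^ n)).
Proof.
set x := Cscal (/ rho) z.
rewrite CsumE.
etransitivity; first exact: (@fall_id x (fun n m => S2w n m x) (S2_0 x) (S2_rec x) n
   (Cscal (/ rho) (Csub (RtoC P) z))).
rewrite /x !CscalM.
have -> : (RtoC (/ rho) : CC) * z + (RtoC (/ rho) : CC) * (Csub (RtoC P) z : CC) = RtoC (/ rho * P).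
  rewrite RtoC_mulM -[Csub _ _]/((RtoC P : CC) - z); ring.
by rewrite -RtoC_pow pt_real RtoC_mulM.
Qed.

Lemma part3_pt n rho (z : CC) (P : R) :
  Csum (fun m => Cmul (S2w n m (Copp (Cscal (/ rho) z))) (Cfall (Cscal (/ rho) (Csub z (RtoC P))) m)) n
  = Cscal (P ^ n) (RtoC ((-1) ^ n / rho ^ n)).
Proof.
set x := Copp (Cscal (/ rho) z).
rewrite CsumE.
etransitivity; first exact: (@fall_id x (fun n m => S2w n m x) (S2_0 x) (S2_rec x) n
   (Cscal (/ rho) (Csub z (RtoC P)))).
rewrite /x !CscalM.
have -> : - ((RtoC (/ rho) : CC) * z) + (RtoC (/ rho) : CC) * (Csub z (RtoC P) : CC) = RtoC (- (/ rho * P)).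
  rewrite RtoC_oppM RtoC_mulM -[Csub _ _]/(z - (RtoC P : CC)); ring.
by rewrite -RtoC_pow pt_real3 RtoC_mulM.
Qed.

End FPS.

Lemma Cscal_cancel r v : r <> 0 -> Cscal (/ r) (Cscal r v) = v.
Proof.
intros H; rewrite Jack.Cscal_comp, Rinv_l by exact H.
destruct v; unfold Cscal; simpl; f_equal; ring.
Qed.

Theorem theorem6 (n k : nat) (rho q : R) (z : Cx) :
  (1 <= k)%nat -> rho <> 0 -> 0 <= q < 1 ->
  Csum (fun m => Cmul (S1w n m (Cscal (/ rho) z))
                      (Cscal (/ rho ^ m) (qpolyBernoulli m k rho q z))) n
    = RtoC (INR (fact n) / (rho ^ n * (qnum q (S n)) ^ k))
  /\
  Csum (fun m => Cmul (S2w n m (Cscal (/ rho) z))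
                      (Cscal (/ rho ^ m) (qpolyCauchy1 m k rho q z))) n
    = RtoC (1 / (rho ^ n * (qnum q (S n)) ^ k))
  /\
  Csum (fun m => Cmul (S2w n m (Copp (Cscal (/ rho) z)))
                      (Cscal (/ rho ^ m) (qpolyCauchy2 m k rho q z))) n
    = RtoC ((-1) ^ n / (rho ^ n * (qnum q (S n)) ^ k)).
Proof.
intros Hk Hr Hq.
assert (HQ : qnum q (S n) <> 0).
{ pose proof (Jack.qnum_pos q Hq (S n) (Nat.lt_0_succ n)); lra. }
assert (HQk := pow_nonzero _ k HQ).
assert (Hrn := pow_nonzero _ n Hr).
split; [|split].
- exact (@FPS.part1 n k rho q z Hr HQ).
- unfold qpolyCauchy1.
  transitivity (Csum (fun m => Cmul (S2w n m (Cscal (/ rho) z))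
     (jackson_multi q k (fun P => Cfall (Cscal (/ rho) (Csub (RtoC P) z)) m))) n).
  { f_equal; apply functional_extensionality; intros m.
    rewrite Cscal_cancel; [reflexivity|apply pow_nonzero; exact Hr]. }
  transitivity (jackson_multi q k (fun t => Csum (fun m => Cmul (S2w n m (Cscal (/ rho) z))
     ((fun m P => Cfall (Cscal (/ rho) (Csub (RtoC P) z)) m) m t)) n)).
  { symmetry. apply (Jack.Jk_sum q Hq k (fun m P => Cfall (Cscal (/ rho) (Csub (RtoC P) z)) m)
       (fun m => S2w n m (Cscal (/ rho) z)) n).
    intros m; apply Jack.bounded_Cfall, Jack.bounded_scal, Jack.bounded_sub;
      [apply Jack.bounded_id|apply Jack.bounded_const]. }
  replace (fun t => Csum (fun m => Cmul (S2w n m (Cscal (/ rho) z))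
     ((fun m P => Cfall (Cscal (/ rho) (Csub (RtoC P) z)) m) m t)) n)
    with (fun t => Cscal (t ^ n) (RtoC (/ rho ^ n))).
  + rewrite (Jack.Jk_mono q Hq). unfold Cscal, RtoC; simpl; f_equal; [field; split; assumption|ring].
  + apply functional_extensionality; intros t. symmetry. exact (@FPS.part2_pt n rho z t).
- unfold qpolyCauchy2.
  transitivity (Csum (fun m => Cmul (S2w n m (Copp (Cscal (/ rho) z)))
     (jackson_multi q k (fun P => Cfall (Cscal (/ rho) (Csub z (RtoC P))) m))) n).
  { f_equal; apply functional_extensionality; intros m.
    rewrite Cscal_cancel; [reflexivity|apply pow_nonzero; exact Hr]. }
  transitivity (jackson_multi q k (fun t => Csum (fun m => Cmul (S2w n m (Copp (Cscal (/ rho) z)))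
     ((fun m P => Cfall (Cscal (/ rho) (Csub z (RtoC P))) m) m t)) n)).
  { symmetry. apply (Jack.Jk_sum q Hq k (fun m P => Cfall (Cscal (/ rho) (Csub z (RtoC P))) m)
       (fun m => S2w n m (Copp (Cscal (/ rho) z))) n).
    intros m; apply Jack.bounded_Cfall, Jack.bounded_scal, Jack.bounded_sub;
      [apply Jack.bounded_const|apply Jack.bounded_id]. }
  replace (fun t => Csum (fun m => Cmul (S2w n m (Copp (Cscal (/ rho) z)))
     ((fun m P => Cfall (Cscal (/ rho) (Csub z (RtoC P))) m) m t)) n)
    with (fun t => Cscal (t ^ n) (RtoC ((-1) ^ n / rho ^ n))).
  + rewrite (Jack.Jk_mono q Hq). unfold Cscal, RtoC; simpl; f_equal; [field; split; assumption|ring].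
  + apply functional_extensionality; intros t. symmetry. exact (@FPS.part3_pt n rho z t).
Qed.
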